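(* (1) The code $\mathcal C:\mathbb{F}_q^5\to(\mathbb{F}_q^2)^5$ given by $\mathbf c_i=(x_i,\,x_{i+2}+x_{i+3})$ for $i\in[5]$ (indices modulo $5$ in $[5]$; explicitly $\mathbf c_1=(x_1,x_3+x_4)$, $\mathbf c_2=(x_2,x_4+x_5)$, $\mathbf c_3=(x_3,x_5+x_1)$, $\mathbf c_4=(x_4,x_1+x_2)$, $\mathbf c_5=(x_5,x_2+x_3)$) is a $(5,10,3,5)$-BAC. (2) The code of Construction C built from the good vector $\mathbf v=(2,3,2,4,3,1,1,4)$ (with $t=4$, $n=17$) is a $(17,85,7,17)$-BAC.
   Context: Fix a finite field $\mathbb{F}_q$. For $\mathbf v$ with $t=4$ and $j\in[4]$, $j(\mathbf v)=\max\{i:v_i=j\}$ (so $1(\mathbf v)=7$, $2(\mathbf v)=3$, $3(\mathbf v)=5$, $4(\mathbf v)=8$). Construction C with $n=17$: indices modulo $17$ in $[17]$; for $\mathbf x\in\mathbb{F}_q^{17}$, $i\in[17]$, $j\in[4]$ put $y_{i,j}=x_{i-4-j(\mathbf v)}+x_{i-4-j(\mathbf v)+j}$ and $\mathbf c_i=(x_i,y_{i,1},\dots,y_{i,4})$. An $(n,N,k,m)$-batch array code (BAC) over $\mathbb{F}_q$ is an $\mathbb{F}_q$-linear map $\mathbf x\in\mathbb{F}_q^n\mapsto(\mathbf c_1,\dots,\mathbf c_m)$ with buckets $\mathbf c_\ell\in\mathbb{F}_q^{N_\ell}$, $N_\ell\ge1$, $\sum_\ell N_\ell=N$, such that for every multiset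 $\{\{i_1,\dots,i_k\}\}$ of elements of $[n]$ there is a partition of $[m]$ into $k$ sets $R_1,\dots,R_k$ such that for each $j\in[k]$, $x_{i_j}$ is an $\mathbb{F}_q$-linear combination of values $f_\ell(\mathbf c_\ell)$, $\ell\in R_j$, for some linear functionals $f_\ell$ (independent of $\mathbf x$). *)

(* Defs.v *)
From mathcomp Require Import all_boot all_order all_algebra.
Set Implicit Arguments. Unset Strict Implicit. Unset Printing Implicit Defensive.
Import GRing.Theory.
Local Open Scope ring_scope.

(* Indices: the paper's [n] = {1,...,n} is represented 0-based by 'I_n
   (paper index i  <->  ordinal i-1).  Vectors in F^n are row vectors 'rV[F]_n. *)

Definition mod_idx (n : nat) (z : int) : 'I_n.+1 := inord (absz (z %% n.+1)%Z).

(* For every multiset {{i_1..i_k}} of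
   elements of [n] (given as a k-tuple idx), there is a partition of [m] into
   k sets R_1..R_k (given by the map R : bucket -> part), linear functionals
   f_l on the buckets and coefficients lam_l, independent of x, such that
   x_{i_j} = sum_{l in R_j} lam_l * f_l(c_l) for all x. *)
Definition is_BAC (F : fieldType) (n N k m : nat) (Nl : 'I_m -> nat)
    (enc : forall l : 'I_m, 'rV[F]_n -> 'rV[F]_(Nl l)) : Prop :=
  [/\ (forall l a (x y : 'rV[F]_n), enc l (a *: x + y) = a *: enc l x + enc l y),
      (forall l, (0 < Nl l)%N),
      (\sum_(l < m) Nl l)%N = N &
      forall idx : 'I_k -> 'I_n,
        exists (R : 'I_m -> 'I_k)
               (f : forall l : 'I_m, 'rV[F]_(Nl l) -> F)
               (lam : 'I_m -> F),
          (forall l a (c d : 'rV[F]_(Nl l)), f l (a *: c + d) = a * f l c + f l d) /\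
          forall (j : 'I_k) (x : 'rV[F]_n),
            x ord0 (idx j) = \sum_(l < m | R l == j) lam l * f l (enc l x)].

Definition code5 (F : fieldType) (l : 'I_5) (x : 'rV[F]_5) : 'rV[F]_2 :=
  \row_(b < 2) if b == ord0 then x ord0 l
               else x ord0 (mod_idx 4 (l%:Z + 2)) + x ord0 (mod_idx 4 (l%:Z + 3)).

Definition jpos (v : seq nat) (j : nat) : nat :=
  \max_(i < size v | nth 0%N v i == j) i.+1.

(* Construction C with t = 4 and length n.+1:
   c_i = (x_i, y_{i,1}, ..., y_{i,4}),
   y_{i,j} = x_{i-4-j(v)} + x_{i-4-j(v)+j}, indices mod n.+1.
   (The shift i-4-j(v) is the same in 0-based and 1-based indexing.) *)
Definition constrC (F : fieldType) (v : seq nat) (n : nat)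
    (l : 'I_n.+1) (x : 'rV[F]_n.+1) : 'rV[F]_5 :=
  \row_(b < 5) if b == ord0 then x ord0 l
               else x ord0 (mod_idx n (l%:Z - 4 - (jpos v b)%:Z))
                  + x ord0 (mod_idx n (l%:Z - 4 - (jpos v b)%:Z + b%:Z)).

Definition good_v : seq nat := [:: 2; 3; 2; 4; 3; 1; 1; 4]%N.
Arguments is_BAC : clear implicits.
Arguments code5 : clear implicits.
Arguments constrC : clear implicits.

(* Main.v *)
Require Import Defs.
From mathcomp Require Import all_boot all_order all_algebra.
From mathcomp Require Import zify.
Set Implicit Arguments. Unset Strict Implicit. Unset Printing Implicit Defensive.
Import GRing.Theory.

Definition E := (nat * nat * int)%type.
Definition key (e : E) : nat := e.1.1.
Definition crd (e : E) : nat := e.1.2.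
Definition cf (e : E) : int := e.2.

Definition pairc (supp : nat -> nat -> seq nat) (i l b : nat) : seq (seq E) :=
  match supp l b with
  | [:: p; q] => if (p == i) && (q != l) then [:: [:: (l, b, Posz 1); (q, 0%N, Negz 0)]]
                 else if (q == i) && (p != l) then [:: [:: (l, b, Posz 1); (p, 0%N, Negz 0)]]
                 else [::]
  | _ => [::]
  end.

Definition cands m N (supp : nat -> nat -> seq nat) (i : nat) : seq (seq E) :=
  [:: (i, 0%N, Posz 1)] :: flatten [seq flatten [seq pairc supp i l b | b <- iota 1 N.-1] | l <- iota 0 m].

Fixpoint tryc (rec : nat -> seq nat -> option (seq (nat * E))) (t : nat) (used : seq nat)
   (cs : seq (seq E)) : option (seq (nat * E)) :=
  match cs with
  | [::] => None
  | g :: cs' =>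
    if has (fun e => key e \in used) g then tryc rec t used cs' else
    match rec t.+1 (map key g ++ used) with
    | Some P => Some (map (pair t) g ++ P)
    | None => tryc rec t used cs'
    end
  end.

Fixpoint bdfs (C : seq (seq (seq E))) (M : seq nat) (t : nat) (used : seq nat) : option (seq (nat * E)) :=
  match M with
  | [::] => Some [::]
  | i :: M' => tryc (bdfs C M') t used (nth [::] C i)
  end.

Definition coefg (supp : nat -> nat -> seq nat) (g : seq E) (q : nat) : int :=
  (foldr (fun e acc => cf e * Posz (count_mem q (supp (key e) (crd e))) + acc) 0 g)%R.

Definition valid n m N (supp : nat -> nat -> seq nat) (i : nat) (g : seq E) : bool :=
  all (fun e => (key e < m) && (crd e < N) && all (fun p => p < n) (supp (key e) (crd e))) g &&
  (i < n) && all (fun q => coefg supp g q == Posz (q == i)) (i :: flatten [seq supp (key e) (crd e) | e <- g]).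

Definition grp (P : seq (nat * E)) (t : nat) : seq E := [seq pe.2 | pe <- P & pe.1 == t].

Definition good (k m : nat) (C : seq (seq (seq E))) (M : seq nat) : bool :=
  match bdfs C M 0 [::] with
  | None => false
  | Some P => uniq (map (fun pe => key pe.2) P) && all (fun pe => (pe.1 < k) && (key pe.2 < m)) P
  end.

Fixpoint allms (n k lo : nat) (P : seq nat -> bool) : bool :=
  match k with
  | 0 => P [::]
  | k'.+1 => all (fun i => allms n k' i (fun s => P (i :: s))) (iota lo (n - lo))
  end.

Definition tsupp (T : seq (seq (seq nat))) (l b : nat) : seq nat := nth [::] (nth [::] T l) b.

Definition check_all n m k N (T : seq (seq (seq nat))) : bool :=
  let supp := tsupp T in
  let C := mkseq (fun i => filter (valid n m N supp i) (cands m N supp i)) n in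
  allms n k 0 (good k m C).

Definition supp5 (l b : nat) : seq nat :=
  if b == 0%N then [:: l] else [:: absz ((l%:Z + 2) %% 5)%Z; absz ((l%:Z + 3) %% 5)%Z].
Definition T5 := mkseq (fun l => mkseq (supp5 l) 2) 5.

Definition Jv (b : nat) : nat := nth 0%N [:: 0; 7; 3; 5; 8]%N b.
Definition suppC (l b : nat) : seq nat :=
  if b == 0%N then [:: l] else
  [:: absz ((l%:Z - 4 - (Jv b)%:Z) %% 17)%Z; absz ((l%:Z - 4 - (Jv b)%:Z + b%:Z) %% 17)%Z].
Definition TC := mkseq (fun l => mkseq (suppC l) 5) 17.


Lemma allmsP n k lo P : allms n k lo P -> forall s, size s = k -> path leq lo s ->
  all (fun p => p < n) s -> P s.
Proof.
elim: k lo P => [|k IH] lo P /=; first by move=> H [|].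
move=> /allP H [|i s] //= [Hs] /andP[Hlo Hp] /andP[Hi Ha].
have Hm : i \in iota lo (n - lo) by rewrite mem_iota subnKC ?Hlo //; apply: ltnW (leq_ltn_trans Hlo Hi).
exact: (IH i (fun s => P (i :: s)) (H i Hm) s Hs Hp Ha).
Qed.

Local Open Scope ring_scope.

Lemma coefg_sum supp g q :
  coefg supp g q = \sum_(e <- g) cf e * Posz (count_mem q (supp (key e) (crd e))).
Proof. by elim: g => [|e g IH]; rewrite ?big_nil ?big_cons //= IH. Qed.

Lemma coefg0 supp g q : q \notin flatten [seq supp (key e) (crd e) | e <- g] -> coefg supp g q = 0.
Proof.
elim: g => [|e g IH] //=; rewrite mem_cat negb_or => /andP[H1 H2].
by rewrite IH // (count_memPn H1) mulr0 add0r.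
Qed.

Lemma sum_count (F : nzRingType) n' (x : 'I_n'.+1 -> F) (s : seq nat) :
  all (fun p => (p < n'.+1)%N) s ->
  \sum_(p <- s) x (inord p) = \sum_(q < n'.+1) (count_mem (val q) s)%:R * x q.
Proof.
elim: s => [|p s IH] /=.
  by rewrite big_nil big1 // => q _; rewrite mul0r.
move=> /andP[Hp Hs]; rewrite big_cons IH //.
under [RHS]eq_bigr do rewrite natrD mulrDl.
rewrite big_split /=; congr (_ + _).
rewrite (bigD1 (inord p)) //= inordK // eqxx mul1r big1 ?addr0 // => q Hq.
case: eqP => [Epq|]; last by rewrite mul0r.
case/negP: Hq; apply/eqP/val_inj; by rewrite /= inordK // Epq.
Qed.

Lemma recov (F : nzRingType) n' supp (x : 'I_n'.+1 -> F) (g : seq E) (i : nat) :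
  all (fun e => all (fun p => (p < n'.+1)%N) (supp (key e) (crd e))) g ->
  (forall q, (q < n'.+1)%N -> coefg supp g q = Posz (q == i)) -> (i < n'.+1)%N ->
  \sum_(e <- g) (cf e)%:~R * \sum_(p <- supp (key e) (crd e)) x (inord p) = x (inord i).
Proof.
move=> /allP Hb Hc Hi.
transitivity (\sum_(e <- g) \sum_(q < n'.+1) ((cf e)%:~R * (count_mem (val q) (supp (key e) (crd e)))%:R * x q)).
  apply: eq_big_seq => e He; rewrite sum_count ?Hb // mulr_sumr.
  by apply: eq_bigr => q _; rewrite mulrA.
rewrite exchange_big /=.
transitivity (\sum_(q < n'.+1) (coefg supp g q)%:~R * x q).
  apply: eq_bigr => q _; rewrite -mulr_suml coefg_sum; congr (_ * _).
  rewrite (big_morph (fun z : int => z%:~R : F) (intrD _) (mulr0z 1)).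
  by apply: eq_bigr => e _; rewrite intrM.
rewrite (bigD1 (inord i)) //= inordK // Hc // eqxx mul1r big1 ?addr0 // => q Hq.
rewrite Hc //; case: eqP => [Eq|]; last by rewrite mul0r.
by case/negP: Hq; apply/eqP/val_inj; rewrite /= inordK // Eq.
Qed.
Local Close Scope ring_scope.

Lemma tryc_some rec t used cs P : tryc rec t used cs = Some P ->
  exists2 g, g \in cs & exists2 P', rec t.+1 (map key g ++ used) = Some P' & P = map (pair t) g ++ P'.
Proof.
elim: cs => [|g cs IH] //=.
have Hl : forall P0, tryc rec t used cs = Some P0 -> P0 = P -> exists2 g0, g0 \in g :: cs &
   exists2 P', rec t.+1 (map key g0 ++ used) = Some P' & P = map (pair t) g0 ++ P'.
  move=> P0 H E0; subst P0; case: (IH H) => g' Hg' HP; exists g' => //; by rewrite in_cons Hg' orbT.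
case: ifP => _ H; first exact: (Hl P H).
move: H; case E: (rec _ _) => [P'|] H; last exact: (Hl P H).
exists g; first by rewrite in_cons eqxx.
by exists P' => //; case: H => <-.
Qed.

Lemma grp_map t g t' : grp (map (pair t) g) t' = if t' == t then g else [::].
Proof.
elim: g => [|e g IH]; first by rewrite /grp; case: eqP.
move: IH; rewrite /grp /= => IH; rewrite eq_sym; case: eqP => H /=; rewrite IH.
  by rewrite H eqxx.
by case: eqP H.
Qed.

Lemma grp_nil P t' : (forall pe, pe \in P -> pe.1 != t') -> grp P t' = [::].
Proof.
move=> H; rewrite /grp (@eq_in_filter _ _ pred0); first by rewrite filter_pred0.
by move=> pe /H /negbTE.
Qed.

Lemma bdfsP C M : forall t used P, bdfs C M t used = Some P ->
  (forall pe, pe \in P -> (t <= pe.1 < t + size M)%N) /\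
  (forall t', (t <= t' < t + size M)%N -> grp P t' \in nth [::] C (nth 0%N M (t' - t))).
Proof.
elim: M => [|i M IH] t used P /=.
  by case=> <-; split => // t'; rewrite addn0; lia.
case/tryc_some => g Hg [P' HP' ->].
have [IH1 IH2] := IH _ _ _ HP'.
split.
  move=> pe; rewrite mem_cat => /orP[/mapP[e _ ->]|/IH1] /=; lia.
move=> t' Ht'; rewrite /grp filter_cat map_cat -!/(grp _ _) grp_map.
case: eqP => [->|Ne].
  rewrite subnn /= grp_nil ?cats0 // => pe /IH1; lia.
have -> : (t' - t = (t' - t.+1).+1)%N by lia.
by rewrite /= IH2 //; lia.
Qed.
Local Open Scope ring_scope.

Definition kP (pe : nat * E) : nat := key pe.2.

Lemma nth_index_key (P : seq (nat * E)) dflt pe :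
  uniq (map kP P) -> pe \in P -> nth dflt P (index (kP pe) (map kP P)) = pe.
Proof.
elim: P => [|a P IH] //= /andP[Ha Hu] Hpe; rewrite in_cons in Hpe.
case: (kP a =P kP pe) => [E1|Ne] /=.
  case/orP: Hpe => [/eqP -> //|Hpe]; case/negP: Ha; rewrite E1; exact: map_f.
case/orP: Hpe => [/eqP Epe|Hpe]; first by rewrite Epe in Ne.
exact: IH.
Qed.

Lemma sum_keys (V : zmodType) m' (P : seq (nat * E)) dflt (Q : pred (nat * E)) (G : nat * E -> V) :
  uniq (map kP P) -> all (fun pe => (kP pe < m'.+1)%N) P -> ~~ Q dflt ->
  \sum_(l < m'.+1 | Q (nth dflt P (index (val l) (map kP P))))
      G (nth dflt P (index (val l) (map kP P)))
  = \sum_(pe <- P | Q pe) G pe.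
Proof.
move=> Hu /allP Hb HQ.
set ent := fun l : 'I_m'.+1 => nth dflt P (index (val l) (map kP P)).
rewrite big_mkcond /=.
transitivity (\sum_(l < m'.+1 | val l \in map kP P) (if Q (ent l) then G (ent l) else 0)).
  rewrite [RHS]big_mkcond; apply: eq_bigr => l _; case: (boolP (val l \in map kP P)) => //= Hl.
  have Hi : index (val l) (map kP P) = size P by rewrite memNindex ?size_map.
  by rewrite /ent Hi nth_default // (negbTE HQ).
pose r := [seq (inord (kP pe) : 'I_m'.+1) | pe <- P].
have Hr : uniq r.
  rewrite map_inj_in_uniq; first exact: map_uniq Hu.
  move=> a b Ha Hb' /(congr1 val); rewrite /= !inordK ?Hb // => Eab.
  by rewrite -(nth_index_key dflt Hu Ha) Eab nth_index_key.
transitivity (\sum_(l <- r) (if Q (ent l) then G (ent l) else 0)).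
  rewrite big_uniq //; apply: eq_bigl => l; apply/idP/idP.
    case/mapP => pe Hpe El; apply/mapP; exists pe => //; apply/val_inj; rewrite /= inordK ?Hb //.
  case/mapP => pe Hpe El; apply/mapP; exists pe => //; rewrite El /= inordK ?Hb //.
rewrite big_map [RHS]big_mkcond; apply: eq_big_seq => pe Hpe.
by rewrite /ent /= inordK ?Hb // nth_index_key.
Qed.
Local Close Scope ring_scope.
Local Open Scope ring_scope.

Lemma sound (F : fieldType) n' m' k' N' (T : seq (seq (seq nat)))
  (enc : 'I_m'.+1 -> 'rV[F]_n'.+1 -> 'rV[F]_N'.+1) :
  (forall (l : 'I_m'.+1) x b, (b < N'.+1)%N ->
     enc l x ord0 (inord b) = \sum_(p <- tsupp T l b) x ord0 (inord p)) ->
  check_all n'.+1 m'.+1 k'.+1 N'.+1 T ->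
  forall idx : 'I_k'.+1 -> 'I_n'.+1,
  exists (R : 'I_m'.+1 -> 'I_k'.+1) (f : forall l : 'I_m'.+1, 'rV[F]_N'.+1 -> F)
         (lam : 'I_m'.+1 -> F),
    (forall l a (c d : 'rV[F]_N'.+1), f l (a *: c + d) = a * f l c + f l d) /\
    forall (j : 'I_k'.+1) (x : 'rV[F]_n'.+1),
      x ord0 (idx j) = \sum_(l < m'.+1 | R l == j) lam l * f l (enc l x).
Proof.
move=> Henc Hall idx.
set supp := tsupp T in Henc.
pose C := mkseq (fun i => filter (valid n'.+1 m'.+1 N'.+1 supp i) (cands m'.+1 N'.+1 supp i)) n'.+1.
have HG := allmsP (P := good k'.+1 m'.+1 C) Hall.
pose s := [seq val (idx j) | j <- enum 'I_k'.+1].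
pose M := sort leq s.
have sizeM : size M = k'.+1 by rewrite size_sort size_map size_enum_ord.
have pM : path leq 0 M.
  by rewrite /M; case: (sort leq s) (sort_sorted leq_total s).
have aM : all (fun p => (p < n'.+1)%N) M.
  by apply/allP => p; rewrite /M mem_sort => /mapP [j _ ->]; exact: ltn_ord.
have := HG M sizeM pM aM; rewrite /good.
case Edfs: (bdfs C M 0%N [::]) => [P|] //.
case/andP => [Huniq Hk].
have pe : perm_eq s M by rewrite perm_sym perm_sort perm_refl.
case/(perm_iotaP 0%N): pe => Is HIs Hs.
have HIsm : forall u, (u \in Is) = (u < k'.+1)%N.
  by move=> u; rewrite (perm_mem HIs) mem_iota sizeM.
have HIsu : uniq Is by rewrite (perm_uniq HIs) iota_uniq.
have HIss : size Is = k'.+1 by rewrite (perm_size HIs) size_iota sizeM.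
pose dflt : nat * E := (k'.+1, (0%N, 0%N, 0)).
pose ent (l : 'I_m'.+1) := nth dflt P (index (val l) (map kP P)).
exists (fun l => inord (index (ent l).1 Is)),
       (fun l c => c ord0 (inord (crd (ent l).2))),
       (fun l => (cf (ent l).2)%:~R).
split; first by move=> l a c d; rewrite !mxE.
move=> j x.
pose t := nth 0%N Is j.
have tk : (t < k'.+1)%N by rewrite -HIsm mem_nth // HIss.
have Hij : val (idx j) = nth 0%N M t.
  have := congr1 (fun z => nth 0%N z j) Hs.
  by rewrite /= (nth_map ord0) ?size_enum_ord // nth_ord_enum (nth_map 0%N) ?HIss.
have /allP HPk := Hk.
have entP : forall l : 'I_m'.+1, val l \in map kP P -> ent l \in P.
  by move=> l Hl; rewrite /ent mem_nth // -(size_map kP) index_mem.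
have entN : forall l : 'I_m'.+1, val l \notin map kP P -> ent l = dflt.
  by move=> l Hl; rewrite /ent nth_default // memNindex ?size_map.
transitivity (\sum_(l < m'.+1 | (ent l).1 == t)
   (cf (ent l).2)%:~R * (enc l x) ord0 (inord (crd (ent l).2))); last first.
  rewrite big_mkcond [RHS]big_mkcond; apply: eq_bigr => l _ /=.
  case: (boolP (val l \in map kP P)) => Hl; last by rewrite entN //= !mul0r !if_same.
  have /andP[Hu _] := HPk _ (entP l Hl).
  have -> : (inord (index (ent l).1 Is) == j) = ((ent l).1 == t).
    rewrite -val_eqE /= inordK; last by rewrite -HIss index_mem HIsm.
    apply/eqP/eqP => [Ej|->]; last by rewrite index_uniq ?HIss.
    by rewrite /t -Ej nth_index ?HIsm.
  by [].
pose G (pe : nat * E) := (cf pe.2)%:~R * (enc (inord (kP pe)) x) ord0 (inord (crd pe.2)) : F.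
transitivity (\sum_(l < m'.+1 | (ent l).1 == t) G (ent l)); last first.
  apply: eq_bigr => l /eqP Hlt.
  have Hl : val l \in map kP P.
    apply: contraT => Hl; move: Hlt; rewrite entN //= => Ek.
    by move: tk; rewrite -Ek ltnn.
  rewrite /G; congr (_ * _); congr (enc _ x ord0 _); apply: val_inj.
  rewrite /= inordK; last by have /andP[_ ->] := HPk _ (entP l Hl).
  by rewrite /ent -(nth_map dflt (kP dflt)) ?nth_index // -(size_map kP) index_mem.
have Hkb : all (fun pe => (kP pe < m'.+1)%N) P by apply/allP => pe /HPk /andP[].
have HQd : ~~ ((fun pe : nat * E => pe.1 == t) dflt) by rewrite /= eq_sym neq_ltn tk.
rewrite /ent; have -> := @sum_keys _ m' P dflt (fun pe => pe.1 == t) G Huniq Hkb HQd.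
rewrite -big_filter.
have -> : \sum_(i <- [seq pe <- P | pe.1 == t]) G i = \sum_(e <- grp P t)
   (cf e)%:~R * (enc (inord (key e)) x) ord0 (inord (crd e)) by rewrite big_map.
have [_ HB] := bdfsP Edfs.
have HMt : (nth 0%N M t < n'.+1)%N by apply: (allP aM); rewrite mem_nth // sizeM.
have := HB t; rewrite add0n subn0 sizeM tk => /(_ isT).
rewrite nth_mkseq // mem_filter => /andP[].
rewrite /valid => /andP[/andP[/allP Hb Hi] /allP Hc].
rewrite -[idx j]inord_val Hij; symmetry.
transitivity (\sum_(e <- grp P t) (cf e)%:~R * \sum_(p <- supp (key e) (crd e)) x ord0 (inord p)).
  apply: eq_big_seq => e He; congr (_ * _).
  have /andP[/andP[Hk1 Hn1] _] := Hb e He.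
  by rewrite Henc // inordK.
apply: (@recov _ n' supp (fun q => x ord0 q)) => //.
- by apply/allP => e /Hb /andP[].
- move=> q Hq; case: (boolP (q \in nth 0%N M t :: flatten [seq supp (key e) (crd e) | e <- grp P t])) => Hqm.
    exact/eqP/Hc.
  rewrite coefg0; last by move: Hqm; rewrite in_cons negb_or => /andP[].
  move: Hqm; rewrite in_cons negb_or => /andP[/negbTE -> _] //.
Qed.
Local Close Scope ring_scope.
Local Open Scope ring_scope.

Lemma jposE (b : nat) : (0 < b < 5)%N -> jpos good_v b = Jv b.
Proof.
rewrite /jpos /= big_mkcond !big_ord_recr big_ord0 /=.
by case: b => [|[|[|[|[|[|b]]]]]].
Qed.

Lemma enc5 (F : fieldType) (l : 'I_5) x b : (b < 2)%N ->
  code5 F l x ord0 (inord b) = \sum_(p <- tsupp T5 l b) x ord0 (inord p).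
Proof.
move=> Hb; rewrite /tsupp /T5 nth_mkseq ?ltn_ord // nth_mkseq // mxE.
case: b Hb => [|[|b]] // _.
  rewrite (_ : inord 0 = ord0); last by apply: val_inj; rewrite /= inordK.
  by rewrite eqxx /supp5 /= big_cons big_nil addr0 inord_val.
rewrite (_ : (inord 1 == ord0) = false); last by rewrite -val_eqE /= inordK.
by rewrite /supp5 /= !big_cons big_nil addr0.
Qed.

Lemma encC (F : fieldType) (l : 'I_17) x b : (b < 5)%N ->
  constrC F good_v 16 l x ord0 (inord b) = \sum_(p <- tsupp TC l b) x ord0 (inord p).
Proof.
move=> Hb; rewrite /tsupp /TC nth_mkseq ?ltn_ord // nth_mkseq // mxE.
case: b Hb => [|b] Hb.
  rewrite (_ : inord 0 = ord0); last by apply: val_inj; rewrite /= inordK.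
  by rewrite eqxx /suppC /= big_cons big_nil addr0 inord_val.
rewrite (_ : (inord b.+1 == ord0) = false); last by rewrite -val_eqE /= inordK.
rewrite inordK // jposE //.
by rewrite /suppC /= !big_cons big_nil addr0.
Qed.

Lemma lin_code5 (F : fieldType) l a (x y : 'rV[F]_5) :
  code5 F l (a *: x + y) = a *: code5 F l x + code5 F l y.
Proof. by apply/rowP => b; rewrite !mxE; case: ifP => _; rewrite ?mxE // mulrDr addrACA. Qed.

Lemma lin_codeC (F : fieldType) l a (x y : 'rV[F]_17) :
  constrC F good_v 16 l (a *: x + y) = a *: constrC F good_v 16 l x + constrC F good_v 16 l y.
Proof. by apply/rowP => b; rewrite !mxE; case: ifP => _; rewrite ?mxE // mulrDr addrACA. Qed.

Lemma check5 : check_all 5 5 3 2 T5 = true.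
Proof. vm_compute. reflexivity. Qed.

Theorem part1 (F : finFieldType) : is_BAC F 5 10 3 5 (fun _ => 2) (code5 F).
Proof.
split.
- exact: lin_code5.
- by [].
- by rewrite sum_nat_const card_ord.
- exact: (@sound F 4 4 2 1 T5 (code5 F) (@enc5 F) check5).
Qed.
Local Close Scope ring_scope.
Lemma checkC : check_all 17 17 7 5 TC = true.
Proof. vm_compute. reflexivity. Qed.

Theorem corollary4p8 (F : finFieldType) :
  is_BAC F 5 10 3 5 (fun _ => 2) (code5 F) /\
  is_BAC F 17 85 7 17 (fun _ => 5) (constrC F good_v 16).
Proof.
split; first exact: part1.
split.
- exact: lin_codeC.
- by [].
- by rewrite sum_nat_const card_ord.
- exact: (@sound F 16 16 6 4 TC (constrC F good_v 16) (@encC F) checkC).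
Qed.
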